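(* Let $d\ge 2$ and let $D$ be obtained by gluing domains $D_1,\dots,D_m\subset T_d$ at a vertex $p$. Then $D$ is optimal if and only if either $p\in\partial D$ and $\sum_{i=1}^m\tau(D_i)+(m-1)\le d-2$, or $p\notin\partial D$ and $\sum_{i=1}^m\tau(D_i)-(d-m)\le d-2$.
   Context: $T_d$ is the $d$-regular tree (connected, acyclic, every vertex of degree $d$). A domain is a finite nonempty connected set $D$ of vertices of $T_d$, identified with its induced subgraph. For $x\in D$, $\deg_D(x)$ is the number of neighbours of $x$ lying in $D$. The (inner vertex) boundary is $\partial D=\{x\in D:\deg_D(x)<d\}$. For $k\ge1$, $I_d(k)=\min\{|\partial D| : D\subset T_d \text{ a domain with } |D|=k\}$, and $D$ is optimal if $|\partial D|=I_d(|D|)$. For $|D|\ge2$, $\tau(D)=\sum_{x\in\partial D}(\deg_D(x)-1)$. Gluing: given domains $D_1,\dots,D_m$ with $|D_i|\ge 2$, $2\le m\le d$, and a vertex $p$ with $p\in\partial D_i$ for all $i$, one says $D$ is obtained by gluing $D_1,\dots,D_m$ at $p$ if $D=\bigcup_{i=1}^m D_i$ and $D_i\cap D_j=\{p\}$ for all $i\ne j$. *)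

(* Defs.v *)
From mathcomp Require Import all_boot all_order all_algebra.
From mathcomp Require Import finmap.
Set Implicit Arguments. Unset Strict Implicit. Unset Printing Implicit Defensive.
Local Open Scope fset_scope.

(* Model of the d-regular tree T_d:
   vertices are words [:: a_0; a_1; ...; a_k] with a_0 < d and a_j < d-1 (j >= 1);
   the empty word is the root.  The root has the d children [:: a], a < d; every
   other vertex u has its parent (drop last letter) and d-1 children rcons u b,
   b < d-1.  Hence every vertex has degree d, and the graph is a tree. *)
Definition tvertex (d : nat) (v : seq nat) : bool :=
  match v with
  | [::] => true
  | a :: s => (a < d) && all (fun b => b < d.-1) s
  end.

Definition tchild (u v : seq nat) : bool :=
  (size v == (size u).+1) && (take (size u) v == u).

Definition tadj (u v : seq nat) : bool := tchild u v || tchild v u.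

Definition domain (d : nat) (D : {fset seq nat}) : Prop :=
  [/\ D != fset0,
      (forall x, x \in D -> tvertex d x) &
      (forall x y, x \in D -> y \in D ->
         exists p : seq (seq nat),
           [/\ path tadj x p, last x p = y & all (fun z => z \in D) p])].

Definition degD (D : {fset seq nat}) (x : seq nat) : nat :=
  #|` [fset y in D | tadj x y] |.

Definition bdry (d : nat) (D : {fset seq nat}) : {fset seq nat} :=
  [fset x in D | degD D x < d].

Definition optimal (d : nat) (D : {fset seq nat}) : Prop :=
  domain d D /\
  forall D' : {fset seq nat}, domain d D' -> #|` D'| = #|` D| ->
    #|` bdry d D| <= #|` bdry d D'|.

(* tau(D) = sum_{x in ∂D} (deg_D(x) - 1)  (used for |D| >= 2, where deg_D(x) >= 1) *)
Definition tau (d : nat) (D : {fset seq nat}) : nat :=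
  \sum_(x <- bdry d D) (degD D x - 1).

Definition glued (d m : nat) (D : {fset seq nat}) (Ds : 'I_m -> {fset seq nat})
    (p : seq nat) : Prop :=
  [/\ 2 <= m <= d,
      (forall i, domain d (Ds i) /\ 2 <= #|` Ds i|),
      (forall i, p \in bdry d (Ds i)),
      (forall x, x \in D <-> exists i, x \in Ds i) &
      (forall i j, i != j -> Ds i `&` Ds j = [fset p])].

(* Main.v *)
Require Import Defs.
From mathcomp Require Import all_boot all_order all_algebra.
From mathcomp Require Import finmap zify.
Set Implicit Arguments. Unset Strict Implicit. Unset Printing Implicit Defensive.

Local Open Scope fset_scope.


Lemma card_sep (A : {fset seq nat}) (P : pred (seq nat)) :
  #|` [fset x in A | P x]| = count P A.
Proof.
by rewrite card_fset_sum1 -big_fset_condE -sum1_count big_mkcond /= .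
Qed.

Lemma sum_sep (A : {fset seq nat}) (P : pred (seq nat)) (F : seq nat -> nat) :
  \sum_(x <- [fset x in A | P x]) F x = \sum_(x <- A | P x) F x.
Proof. by rewrite -big_fset_condE. Qed.

Local Close Scope fset_scope.

Local Open Scope fset_scope.


Definition par (u : seq nat) := take (size u).-1 u.

Lemma tchild_rcons u c : tchild u (rcons u c).
Proof. by rewrite /tchild size_rcons eqxx /= -cats1 take_size_cat. Qed.

Lemma tchildE u v : tchild u v = (v == rcons u (last 0 v)).
Proof.
apply/idP/eqP.
  rewrite /tchild => /andP[/eqP sv /eqP tv].
  have ne : v != [::] by case: (v) sv.
  case/lastP: v ne sv tv => // v' c _; rewrite size_rcons => -[su] tv.
  rewrite -su -cats1 take_size_cat // in tv.
  by rewrite -tv last_rcons.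
by move=> ->; apply: tchild_rcons.
Qed.

Lemma tchild_par u v : tchild u v -> par v = u.
Proof.
by rewrite tchildE => /eqP ->; rewrite /par size_rcons /= -cats1 take_size_cat.
Qed.

Lemma tchild_size u v : tchild u v -> size v = (size u).+1.
Proof. by rewrite tchildE => /eqP ->; rewrite size_rcons. Qed.

Lemma par_tchild v : v != [::] -> tchild (par v) v.
Proof.
case/lastP: v => // v c _; rewrite /par size_rcons /= -cats1 take_size_cat //.
by rewrite cats1 tchild_rcons.
Qed.

Lemma prefix_child y z z' : prefix y z -> tchild z z' -> prefix y z'.
Proof. by move=> yz; rewrite tchildE => /eqP ->; apply: prefix_trans yz (prefix_rcons _ _). Qed.

Lemma prefix_par y z : prefix y z -> z != y -> prefix y (par z).
Proof.
move=> yz; case/prefixP: yz => s ->; case/lastP: s => [|s c]; first by rewrite cats0 eqxx.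
move=> _; rewrite /par size_cat size_rcons addnS /= -rcons_cat -cats1 take_size_cat //.
  by apply: prefix_prefix.
by rewrite size_cat.
Qed.

Lemma prefix_anti (y z : seq nat) : prefix y z -> prefix z y -> y = z.
Proof.
move=> h1 h2; have s : size y = size z.
  by apply/eqP; rewrite eqn_leq !size_prefix.
by move: h1; rewrite prefixE s take_size => /eqP.
Qed.

Lemma tadj_sym : symmetric tadj.
Proof. by move=> u v; rewrite /tadj orbC. Qed.

Lemma step_out y z z' : tadj z z' -> prefix y z -> ~~ prefix y z' -> z = y /\ z' = par y.
Proof.
move=> /orP[c|c] yz nyz'.
  by rewrite (prefix_child yz c) in nyz'.
have pz := tchild_par c.
case: (eqVneq z y) => [ezy|ne]; first by subst z; rewrite (tchild_par c).
by move: (prefix_par yz ne); rewrite pz (negbTE nyz').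
Qed.

Lemma path_cross (P : pred (seq nat)) a s :
  path tadj a s -> P a -> ~~ P (last a s) ->
  exists z z', [/\ z \in a :: s, z' \in s, tadj z z', P z & ~~ P z'].
Proof.
elim: s a => [|b s IH] a /=; first by move=> _ ->.
case/andP=> ab pb Pa nl.
case: (boolP (P b)) => Pb.
  have [z [z' [h1 h2 h3 h4 h5]]] := IH b pb Pb nl.
  exists z, z'; split=> //; first by rewrite inE h1 orbT.
  by rewrite inE h2 orbT.
by exists a, b; rewrite !inE !eqxx /=.
Qed.

Lemma path_out (S : pred (seq nat)) y a s :
  path tadj a s -> a \in S -> all S s -> prefix y a -> ~~ prefix y (last a s) ->
  y \in S /\ par y \in S.
Proof.
move=> pa aS aSs ya nyl.
have [z [z' [h1 h2 h3 h4 h5]]] := path_cross (P := prefix y) pa ya nyl.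
have [ez ez'] := step_out h3 h4 h5; subst z z'.
split; last by apply: (allP aSs).
by move: h1; rewrite inE => /orP[/eqP->|/(allP aSs)].
Qed.

Lemma path_in (S : pred (seq nat)) y a s :
  path tadj a s -> all S s -> ~~ prefix y a -> prefix y (last a s) -> y \in S.
Proof.
move=> pa aSs nya yl.
have [z [z' [h1 h2 h3 h4 h5]]] :=
  path_cross (P := fun z => ~~ prefix y z) pa nya (ltac:(by rewrite negbK)).
rewrite negbK in h5; rewrite tadj_sym in h3.
have [ez' _] := step_out h3 h5 h4; subst z'.
by apply: (allP aSs).
Qed.

Local Close Scope fset_scope.

Local Open Scope fset_scope.


Definition top (D : {fset seq nat}) x := (x \in D) && ((x == [::]) || (par x \notin D)).

Lemma conn d D x y : domain d D -> x \in D -> y \in D ->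
  exists s, [/\ path tadj x s, last x s = y & all (fun z => z \in D) s].
Proof. by case=> _ _ c; apply: c. Qed.

Lemma top_uniq d D x y : domain d D -> top D x -> top D y -> x = y.
Proof.
move=> dD.
have H : forall x y, top D x -> top D y -> prefix x y.
  move=> a b /andP[aD ta] /andP[bD tb].
  apply/negPn/negP => nab.
  have [s [ps ls als]] := conn dD aD bD.
  have [_ pa] := path_out (S := fun z => z \in D) ps aD als (prefix_refl a) (ltac:(by rewrite ls)).
  move: ta; rewrite pa orbF => /eqP ea; subst a.
  by rewrite prefix0s in nab.
by move=> tx ty; apply: prefix_anti; apply: H.
Qed.

Lemma top_exists d D : domain d D -> exists x, top D x.
Proof.
case=> ne _ _.
have [x0 x0D] : exists x, x \in D.
  by case: (fset_0Vmem D) ne => [->|[x h] _]; [rewrite eqxx|exists x].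
suff : forall n x, x \in D -> size x <= n -> exists x, top D x by move=> H; exact: (H _ x0 x0D (leqnn _)).
elim=> [|n IH] x xD.
  rewrite leqn0 size_eq0 => /eqP ex; exists x; by rewrite /top xD ex eqxx.
move=> sx; case: (boolP (top D x)) => [t|]; first by exists x.
rewrite /top xD /= negb_or negbK => /andP[nx pD].
apply: (IH _ pD); have hx : 0 < size x by case: (x) nx.
rewrite /par size_take; case: ltnP => h; [lia|by rewrite leqNgt ltn_predL hx in h].
Qed.

Lemma count_top d D : domain d D -> count (top D) D = 1.
Proof.
move=> dD; have [t tt] := top_exists dD.
rewrite (@eq_in_count _ _ (pred1 t)); last first.
  move=> x xD /=; apply/idP/eqP => [tx|->//]; exact: top_uniq dD tx tt.
by rewrite count_uniq_mem ?fset_uniq //; case/andP: tt => ->.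
Qed.

Definition nb (D : {fset seq nat}) x := (x != [::]) && (par x \in D).

Lemma count_sum (P : pred (seq nat)) (s : seq (seq nat)) :
  count P s = \sum_(y <- s) P y.
Proof. by elim: s => [|a s IH]; rewrite ?big_nil ?big_cons //= IH. Qed.

Lemma count_parent (D : {fset seq nat}) x : count (fun y => tchild y x) D = nb D x.
Proof.
rewrite /nb; case: (eqVneq x [::]) => [->|nx] /=.
  by rewrite (eq_count (a2 := pred0)) ?count_pred0 // => y /=; apply/negP => /tchild_size.
rewrite (@eq_in_count _ _ (pred1 (par x))); first by rewrite count_uniq_mem ?fset_uniq.
move=> y _ /=; apply/idP/eqP => [/tchild_par //|->]; exact: par_tchild.
Qed.

Lemma deg_split (D : {fset seq nat}) x : degD D x = (count (tchild x) D + nb D x)%N.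
Proof.
rewrite /degD card_sep -count_parent.
have e : count (tadj x) D = count (predU (tchild x) (fun y => tchild y x)) D by [].
rewrite e -count_predUI.
rewrite [X in (_ + X)%N](eq_count (a2 := pred0)) ?count_pred0 ?addn0 // => y /=.
apply/andP => -[/tchild_size h1 /tchild_size h2]; lia.
Qed.

Lemma handshake d (D : {fset seq nat}) : domain d D -> \sum_(x <- D) degD D x = (2 * (#|` D| - 1))%N.
Proof.
move=> dD.
rewrite (eq_bigr (fun x => (count (tchild x) D + nb D x)%N)); last by move=> x _; apply: deg_split.
rewrite big_split /=.
have e1 : \sum_(x <- D) count (tchild x) D = \sum_(x <- D) nb D x.
  rewrite (eq_bigr (fun x => \sum_(y <- D) tchild x y)); last by move=> x _; apply: count_sum.
  rewrite exchange_big /=; apply: eq_bigr => y _.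
  by rewrite -count_parent count_sum.
rewrite e1 -count_sum.
have e2 : count (nb D) D = count (predC (top D)) D.
  apply: eq_in_count => x xD; rewrite /nb /top /= xD /= negb_or negbK //.
rewrite e2 -(count_predC (top D) D) (count_top dD); lia.
Qed.

Local Close Scope fset_scope.

Local Open Scope fset_scope.


Definition nbrs d (x : seq nat) : seq (seq nat) :=
  if x is [::] then [seq [:: a] | a <- iota 0 d]
  else par x :: [seq rcons x b | b <- iota 0 d.-1].

Lemma tvertex_rcons d x c : tvertex d x ->
  tvertex d (rcons x c) = (if x is [::] then c < d else c < d.-1).
Proof.
case: x => [|a s] /=; first by rewrite andbT.
by move=> /andP[-> h]; rewrite all_rcons h andbT.
Qed.

Lemma tvertex_par d x : tvertex d x -> tvertex d (par x).
Proof.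
case: x => [|a s] //= /andP[ad al].
rewrite /par /=; case: s al => [|b s] //= /andP[bd al].
rewrite ad /=; apply/allP => z /mem_take; rewrite inE => /orP[/eqP->//|].
by move/(allP al).
Qed.

Lemma size_nbrs d x : 0 < d -> size (nbrs d x) = d.
Proof. by case: x => [|a s] /=; rewrite ?size_map size_iota //; case: d. Qed.

Lemma uniq_nbrs d x : uniq (nbrs d x).
Proof.
case: x => [|a s] /=.
  by rewrite map_inj_uniq ?iota_uniq // => u v [].
apply/andP; split.
  apply/mapP => -[b _ e]; have := congr1 size e.
  rewrite /par /= size_rcons size_take; case: ltnP => h; lia.
by rewrite map_inj_uniq ?iota_uniq // => u v [] /rcons_inj [].
Qed.

Lemma nbrsP d x y : tvertex d x -> y \in nbrs d x -> tadj x y && tvertex d y.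
Proof.
move=> tx; case: x tx => [|a s] tx /=.
  by case/mapP => c; rewrite mem_iota add0n /= => cd ->; rewrite /tadj /tchild /= cd andbT.
rewrite inE => /orP[/eqP->|].
  by rewrite /tadj par_tchild ?orbT //= tvertex_par.
case/mapP => c; rewrite mem_iota add0n /= => cd ->.
rewrite /tadj tchild_rcons /= all_rcons cd; exact: tx.
Qed.

Lemma nbrs_complete d x y : tvertex d x -> tvertex d y -> tadj x y -> y \in nbrs d x.
Proof.
move=> tx ty /orP[c|c].
  move: (c); rewrite tchildE => /eqP ey; rewrite ey in ty.
  rewrite (tvertex_rcons _ tx) in ty.
  case: x tx c ey ty => [|a s] tx c ey ty /=; rewrite ey.
    by apply/mapP; exists (last 0 y); rewrite ?mem_iota //.
  by rewrite inE; apply/orP; right; apply/mapP; exists (last 0 y); rewrite ?mem_iota.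
have nx : x != [::] by apply/negP => /eqP ex; move: (tchild_size c); rewrite ex.
case: x tx c nx => [|a s] tx c nx //=.
by rewrite inE (tchild_par c) eqxx.
Qed.

Lemma deg_le d D x : domain d D -> tvertex d x -> 0 < d -> degD D x <= d.
Proof.
case=> _ tD _ tx d0; rewrite /degD -(size_nbrs x d0) -(undup_id (uniq_nbrs d x)) -card_fseq.
apply: fsubset_leq_card; apply/fsubsetP => y; rewrite !inE /= => /andP[yD a].
by rewrite nbrs_complete // tD.
Qed.

Lemma deg_ge d D x : tvertex d x -> 0 < d -> {subset nbrs d x <= D} -> d <= degD D x.
Proof.
move=> tx d0 sub; rewrite /degD -{1}(size_nbrs x d0) -(undup_id (uniq_nbrs d x)) -card_fseq.
apply: fsubset_leq_card; apply/fsubsetP => y; rewrite !inE /= => yn.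
by rewrite sub //= (andP (nbrsP tx yn)).1.
Qed.

Local Close Scope fset_scope.



Lemma other (D : {fset seq nat}) x : 2 <= #|` D| -> exists2 y, y \in D & y != x.
Proof.
move=> k2; apply/hasP; rewrite has_count -[count _ _]/(count (predC (pred1 x)) D).
have := count_predC (pred1 x) D; rewrite count_uniq_mem ?fset_uniq //.
by case: (x \in D) => /= e; rewrite -e in k2; lia.
Qed.

Lemma deg_pos d (D : {fset seq nat}) x : domain d D -> 2 <= #|` D| -> x \in D -> 0 < degD D x.
Proof.
move=> dD k2 xD; have [y yD yx] := other x k2.
have [s [ps ls als]] := conn dD xD yD.
case: s ps ls als => [|b s] /=; first by move=> _ e; rewrite e eqxx in yx.
move=> /andP[xb _] _ /andP[bD _].
by rewrite /degD card_sep -has_count; apply/hasP; exists b.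
Qed.

Lemma relation d (D : {fset seq nat}) : 2 <= d -> domain d D -> 2 <= #|` D| ->
  tau d D + (d - 2) * #|` D| + 2 = (d - 1) * #|` bdry d D|.
Proof.
move=> d2 dD k2.
have hs := handshake dD.
rewrite (bigID (fun x => degD D x < d)) /= in hs.
have e1 : \sum_(x <- D | degD D x < d) degD D x = tau d D + #|` bdry d D|.
  rewrite /tau /bdry sum_sep card_sep -sum1_count -big_split /=.
  rewrite big_seq_cond [RHS]big_seq_cond; apply: eq_bigr => x /andP[xD _].
  have := deg_pos dD k2 xD; lia.
have e2 : \sum_(x <- D | ~~ (degD D x < d)) degD D x = d * count (predC (fun x => degD D x < d)) D.
  rewrite -sum1_count big_distrr /=; rewrite big_seq_cond [RHS]big_seq_cond.
  apply: eq_bigr => x /andP[xD h]; rewrite muln1.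
  have := deg_le dD (let: And3 _ t _ := dD in t x xD) (ltnW d2); lia.
have e3 : #|` bdry d D| + count (predC (fun x => degD D x < d)) D = #|` D|.
  by rewrite /bdry card_sep count_predC.
rewrite e1 e2 in hs.
have hb : #|` bdry d D| <= #|` D| by lia.
move: hs k2; rewrite -e3 => hs k2; clear e3.
move: hs k2; generalize (tau d D) (#|` bdry d D|) (#|` D|)
  (count (predC (fun x => degD D x < d)) D) => t b k c hs k2; clear hb.
case: d d2 {dD e1 e2} hs => [|[|e]] //= _ hs.
rewrite !subn1 /= in hs *; rewrite subn2 /=; nia.
Qed.



Lemma sub_in_count (a1 a2 : pred (seq nat)) (s : seq (seq nat)) :
  {in s, forall x, a1 x -> a2 x} -> count a1 s <= count a2 s.
Proof.
elim: s => [|b s IH] //= h.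
have h' : {in s, forall x, a1 x -> a2 x} by move=> x xs; apply: h; rewrite inE xs orbT.
have := IH h'; case: (boolP (a1 b)) => ab.
  by rewrite (h b (mem_head _ _) ab) /=; lia.
by case: (a2 b) => /=; lia.
Qed.

Lemma pivot d E a b : domain d E -> a \in E -> b \in E -> a != b ->
  size b <= size a -> par a \notin E -> False.
Proof.
move=> dE aE bE ab sba pa.
have [s [ps ls als]] := conn dE aE bE.
have nab : ~~ prefix a (last a s).
  rewrite ls; apply/negP => h.
  have sab : size a = size b by apply/eqP; rewrite eqn_leq sba size_prefix.
  by move: h; rewrite prefixE sab take_size => /eqP ba; rewrite ba eqxx in ab.
have [_ h] := path_out (S := fun z => z \in E) ps aE als (prefix_refl a) nab.
by rewrite h in pa.
Qed.

Lemma no_adj d E x y z : domain d E -> x \in E -> z \in E -> y \notin E -> z != x ->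
  tadj x y -> tadj z y -> False.
Proof.
move=> dE xE zE yE zx /orP[c1|c1] /orP[c2|c2].
- by rewrite -(tchild_par c1) -(tchild_par c2) eqxx in zx.
- apply: (pivot dE zE xE zx); first by rewrite (tchild_size c2) (tchild_size c1); apply/leqW/leqW.
  by rewrite (tchild_par c2).
- apply: (pivot dE xE zE); first by rewrite eq_sym.
    by rewrite (tchild_size c1) (tchild_size c2); apply/leqW/leqW.
  by rewrite (tchild_par c1).
- apply: (pivot dE xE zE); first by rewrite eq_sym.
    by rewrite (tchild_size c1) (tchild_size c2).
  by rewrite (tchild_par c1).
Qed.



Lemma count_U1 (P : pred (seq nat)) (y : seq nat) (E : {fset seq nat}) :
  y \notin E -> count P (y |` E)%fset = P y + count P E.
Proof. by move=> yE; rewrite !count_sum big_fsetU1. Qed.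

Lemma argmax_size (s : seq (seq nat)) : s != [::] ->
  exists2 x, x \in s & forall z, z \in s -> size z <= size x.
Proof.
elim: s => [|a s IH] // _.
case: (eqVneq s [::]) => [->|ne].
  by exists a; rewrite ?mem_head // => z; rewrite inE => /eqP->.
have [x xs hx] := IH ne.
case: (leqP (size a) (size x)) => h.
  exists x; first by rewrite inE xs orbT.
  by move=> z; rewrite inE => /orP[/eqP->//|/hx].
exists a; first by rewrite mem_head.
move=> z; rewrite inE => /orP[/eqP->//|/hx zx]; exact: leq_trans zx (ltnW h).
Qed.

Lemma bdry_exists d E : 2 <= d -> domain d E -> exists x, x \in bdry d E.
Proof.
move=> d2 dE; have [ne _ _] := dE.
have sne : (E : seq (seq nat)) != [::].
  apply/negP => /eqP e; move/negP: ne; apply; apply/eqP/fsetP => z.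
  by rewrite inE -[z \in E]/(z \in (E : seq _)) e.
have [x xE hx] := argmax_size sne.
exists x; rewrite /bdry !inE /=; apply/andP; split; first exact: xE.
apply: (@leq_ltn_trans 1) => //; rewrite /degD card_sep.
apply: leq_trans (sub_in_count (a2 := pred1 (par x)) _) _.
  move=> z zE /orP[c|c] /=.
    by have := hx z zE; rewrite (tchild_size c) ltnn.
  by rewrite (tchild_par c).
by rewrite count_uniq_mem ?fset_uniq // leq_b1.
Qed.

Lemma degU1 (E : {fset seq nat}) y z : y \notin E ->
  degD (y |` E)%fset z = tadj z y + degD E z.
Proof. by move=> yE; rewrite /degD !card_sep count_U1. Qed.

Lemma tadj_irr y : tadj y y = false.
Proof. by apply/negP => /orP[] /tchild_size /eqP; rewrite -addn1 -{1}(addn0 (size y)) eqn_add2l. Qed.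

Lemma domainU1 d (E : {fset seq nat}) x y : domain d E -> x \in E -> tadj x y ->
  tvertex d y -> domain d (y |` E)%fset.
Proof.
move=> dE xE xy ty; have [ne tE cE] := dE.
have sub : forall s, all (fun z => z \in E) s -> all (fun z => z \in (y |` E)%fset) s.
  by move=> s; apply: sub_all => z zE; rewrite !inE zE orbT.
split.
- by apply/negP => /eqP e; have := fset1U1 y E; rewrite e inE.
- by move=> z; rewrite !inE => /orP[/eqP->//|/tE].
move=> a b; rewrite !inE => /orP[/eqP ea|aE] /orP[/eqP eb|bE].
- by exists [::]; rewrite ea eb.
- subst a; have [s [ps ls als]] := cE _ _ xE bE.
  exists (x :: s); split => //=; first by rewrite tadj_sym xy.
  by rewrite !inE xE orbT sub.
- subst b; have [s [ps ls als]] := cE _ _ aE xE.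
  exists (rcons s y); split.
  + by rewrite rcons_path ps ls xy.
  + by rewrite last_rcons.
  + by rewrite all_rcons !inE eqxx /= sub.
- have [s [ps ls als]] := cE _ _ aE bE; exists s; split => //; exact: sub.
Qed.

Lemma grow d : 2 <= d -> forall k, 0 < k -> exists E, [/\ domain d E, #|` E| = k &
  exists v, forall z, z \in bdry d E -> z != v -> degD E z = 1].
Proof.
move=> d2; elim=> [|k IH] // _.
case: (posnP k) => [->|k0].
  exists [fset [::]]%fset; split.
  - split; first by apply/negP => /eqP e; have := fset11 ([::] : seq nat); rewrite e inE.
      by move=> z; rewrite !inE => /eqP->.
    by move=> a b; rewrite !inE => /eqP-> /eqP->; exists [::].
  - by rewrite cardfs1.
  - exists [::] => z; rewrite /bdry !inE /= => /andP[/eqP-> _]; by rewrite eqxx.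
have [E [dE cE [v hv]]] := IH k0.
have [x [xb hx]] : exists x, x \in bdry d E /\
    forall z, z \in bdry d E -> z != x -> degD E z = 1.
  case: (boolP (v \in bdry d E)) => vb; first by exists v.
  have [x xb] := bdry_exists d2 dE; exists x; split => // z zb _; apply: hv => //.
  by apply: contraNneq vb => <-.
have [xE xd] : x \in E /\ degD E x < d by move: xb; rewrite /bdry !inE => /andP[].
have [ne tE cnE] := dE.
have tx := tE x xE.
have [y yn yE] : exists2 y, y \in nbrs d x & y \notin E.
  case: (boolP (all (fun y => y \in E) (nbrs d x))) => [al|].
    have := deg_ge tx (ltnW d2) (fun y yn => allP al y yn); by rewrite leqNgt xd.
  by rewrite -has_predC => /hasP[y yn yE]; exists y.
have /andP[xy ty] := nbrsP tx yn.
exists (y |` E)%fset; split.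
- exact: domainU1 dE xE xy ty.
- by rewrite cardfsU1 yE cE add1n.
exists x => z; rewrite /bdry !inE /= => /andP[/orP[/eqP ez|zE]] dz zx.
  subst z; rewrite degU1 // tadj_irr /= /degD card_sep.
  rewrite (@eq_in_count _ _ (pred1 x)) ?count_uniq_mem ?fset_uniq ?xE //.
  move=> w wE /=; apply/idP/eqP => [a|->]; last by rewrite tadj_sym.
  apply/eqP; apply/negPn/negP => wx; apply: (no_adj dE xE wE yE wx xy); by rewrite tadj_sym.
have nzy : tadj z y = false.
  by apply/negP => zy; apply: (no_adj dE xE zE yE zx xy zy).
move: dz; rewrite degU1 // nzy /= => dz.
by apply: hx => //; rewrite /bdry !inE /= zE dz.
Qed.



Lemma tau_small d E v : 2 <= d ->
  (forall z, z \in bdry d E -> z != v -> degD E z = 1) -> tau d E <= d - 2.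
Proof.
move=> d2 hv; rewrite /tau.
case: (boolP (v \in bdry d E)) => vb.
  rewrite (bigD1_seq v) ?fset_uniq //= big1_seq ?addn0; last first.
    by move=> z /andP[zv zb]; rewrite hv.
  move: vb; rewrite /bdry !inE /= => /andP[_ h]; lia.
rewrite big1_seq // => z zb; rewrite hv //; by apply: contraNneq vb => <-.
Qed.

Lemma opt_iff d D : 2 <= d -> domain d D -> 2 <= #|` D| ->
  (optimal d D <-> tau d D <= d - 2).
Proof.
move=> d2 dD k2; have rD := relation d2 dD k2.
split.
  case=> _ opt.
  have [E [dE cE [v hv]]] := grow d2 (ltnW k2).
  have tE := tau_small d2 hv.
  have k2' : 2 <= #|` E| by rewrite cE.
  have rE := relation d2 dE k2'.
  have bb := opt E dE cE.
  have mb : (d - 1) * #|` bdry d D| <= (d - 1) * #|` bdry d E| by rewrite leq_mul2l bb orbT.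
  move: rD rE mb tE; rewrite cE; generalize ((d-1) * #|` bdry d D|) ((d-1) * #|` bdry d E|).
  lia.
move=> tD; split => // D' dD' c'.
rewrite leqNgt; apply/negP => lt.
have k2' : 2 <= #|` D'| by rewrite c'.
have rD' := relation d2 dD' k2'.
have mb : (d - 1) * #|` bdry d D'| + (d - 1) <= (d - 1) * #|` bdry d D|.
  by rewrite -mulnSr leq_mul2l lt orbT.
move: rD rD' mb tD; rewrite c'; generalize ((d-1) * #|` bdry d D|) ((d-1) * #|` bdry d D'|).
lia.
Qed.



Lemma cross d (A B : {fset seq nat}) p x w : domain d A -> domain d B ->
  p \in A -> p \in B -> x \in A -> w \in B -> x \notin B -> w \notin A ->
  tchild x w -> False.
Proof.
move=> dA dB pA pB xA wB xB wA c.
have [s [ps ls als]] := conn dB wB pB.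
have wp : prefix w p.
  apply/negPn/negP => nwp.
  have [_ h] := path_out (S := fun z => z \in B) ps wB als (prefix_refl w) (ltac:(by rewrite ls)).
  by rewrite -(tchild_par c) h in xB.
have [s' [ps' ls' als']] := conn dA xA pA.
have nwx : ~~ prefix w x.
  apply/negP => /size_prefix; by rewrite (tchild_size c) ltnn.
have := path_in (S := fun z => z \in A) ps' als' nwx (ltac:(by rewrite ls')).
by rewrite (negbTE wA).
Qed.

Lemma bdry_sub d (A : {fset seq nat}) x : x \in bdry d A -> x \in A.
Proof. by rewrite /bdry !inE /= => /andP[]. Qed.

Lemma count_subset (A D : {fset seq nat}) : {subset A <= D} ->
  count (fun x => x \in A) D = #|` A|.
Proof.
move=> sub; rewrite -card_sep; congr (size (enum_fset _)).
by apply/fsetP => x; rewrite !inE /=; apply/andP/idP => [[]//|xA]; rewrite sub.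
Qed.

Lemma sum_ifp (D : {fset seq nat}) p m (F : seq nat -> nat) : p \in D ->
  \sum_(x <- D) (if x == p then m else F x) + F p = m + \sum_(x <- D) F x.
Proof.
move=> pD; rewrite (bigD1_seq p) ?fset_uniq //= [in RHS](bigD1_seq p) ?fset_uniq //= eqxx.
rewrite (eq_bigr F); first lia.
by move=> x /negbTE ->.
Qed.

Section Glue.
Variables (d m : nat) (D : {fset seq nat}) (Ds : 'I_m -> {fset seq nat}) (p : seq nat).
Hypothesis d2 : 2 <= d.
Hypothesis gl : glued d D Ds p.

Lemma g_dom i : domain d (Ds i). Proof. by case: gl => _ h _ _ _; case: (h i). Qed.
Lemma g_size i : 2 <= #|` Ds i|. Proof. by case: gl => _ h _ _ _; case: (h i). Qed.
Lemma g_pb i : p \in bdry d (Ds i). Proof. by case: gl. Qed.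
Lemma g_p i : p \in Ds i. Proof. exact: bdry_sub (g_pb i). Qed.
Lemma g_mem x : x \in D <-> exists i, x \in Ds i. Proof. by case: gl. Qed.
Lemma g_sub i : {subset Ds i <= D}. Proof. by move=> x xi; apply/g_mem; exists i. Qed.
Lemma g_m : 2 <= m. Proof. by case: gl => /andP[]. Qed.
Lemma g_pD : p \in D.
Proof. have i0 : 'I_m := Ordinal (ltnW g_m). exact: g_sub (g_p i0). Qed.

Lemma g_int i j x : i != j -> x \in Ds i -> x \in Ds j -> x = p.
Proof.
move=> ij xi xj; case: gl => _ _ _ _ h.
have : x \in (Ds i `&` Ds j)%fset by rewrite in_fsetI xi xj.
by rewrite (h i j ij) => /fset1P.
Qed.

Lemma g_noadj i j x w : i != j -> x \in Ds i -> w \in Ds j -> x != p -> w != p ->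
  tadj x w -> False.
Proof.
move=> ij xi wj xp wp.
have xj : x \notin Ds j by apply/negP => xj; rewrite (g_int ij xi xj) eqxx in xp.
have wi : w \notin Ds i.
  by apply/negP => wi; rewrite (g_int ij wi wj) eqxx in wp.
case/orP => c.
  exact: (cross (g_dom i) (g_dom j) (g_p i) (g_p j) xi wj xj wi c).
exact: (cross (g_dom j) (g_dom i) (g_p j) (g_p i) wj xi wi xj c).
Qed.

Lemma g_deg i x : x \in Ds i -> x != p -> degD D x = degD (Ds i) x.
Proof.
move=> xi xp; rewrite /degD; congr (size (enum_fset _)).
apply/fsetP => w; rewrite !inE /=; apply/andP/andP => -[wD a]; split => //.
  have [j wj] := (g_mem w).1 wD.
  case: (eqVneq i j) => [->//|ij].
  case: (eqVneq w p) => [->|wp]; first exact: g_p.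
  by case: (g_noadj ij xi wj xp wp a).
exact: g_sub wD.
Qed.

Lemma g_domain : domain d D.
Proof.
split.
- by apply/negP => /eqP e; have := g_pD; rewrite e inE.
- by move=> x /g_mem[i xi]; have [_ t _] := g_dom i; apply: t.
move=> x y /g_mem[i xi] /g_mem[j yj].
have [s1 [p1 l1 a1]] := conn (g_dom i) xi (g_p i).
have [s2 [p2 l2 a2]] := conn (g_dom j) (g_p j) yj.
exists (s1 ++ s2); split.
- by rewrite cat_path p1 l1 p2.
- by rewrite last_cat l1 l2.
rewrite all_cat; apply/andP; split.
  by apply: sub_all a1 => z; apply: g_sub.
by apply: sub_all a2 => z; apply: g_sub.
Qed.

Lemma g_pt x : x \in D -> \sum_(i < m) (x \in Ds i) = if x == p then m else 1.
Proof.
move=> xD; case: (eqVneq x p) => [->|xp].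
  by rewrite (eq_bigr (fun _ => 1)) ?sum_nat_const ?card_ord ?muln1 // => i _; rewrite g_p.
have [i xi] := (g_mem x).1 xD.
rewrite (bigD1 i) //= xi big1 // => j ji.
by apply/eqP; rewrite eqb0; apply/negP => xj; rewrite (g_int ji xj xi) eqxx in xp.
Qed.

Lemma g_ptb x : x \in D ->
  \sum_(i < m) (x \in bdry d (Ds i)) = if x == p then m else (x \in bdry d D).
Proof.
move=> xD; case: (eqVneq x p) => [->|xp].
  by rewrite (eq_bigr (fun _ => 1)) ?sum_nat_const ?card_ord ?muln1 // => i _; rewrite g_pb.
have [i xi] := (g_mem x).1 xD.
rewrite (bigD1 i) //= big1 ?addn0.
  by rewrite /bdry !inE /= xi xD (g_deg xi xp).
move=> j ji; apply/eqP; rewrite eqb0; apply/negP => /bdry_sub xj.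
by rewrite (g_int ji xj xi) eqxx in xp.
Qed.

Lemma g_card : \sum_(i < m) #|` Ds i| + 1 = m + #|` D|.
Proof.
rewrite (eq_bigr (fun i => \sum_(x <- D) (x \in Ds i))); last first.
  by move=> i _; rewrite -(count_subset (g_sub (i := i))) count_sum.
rewrite exchange_big /= (eq_big_seq (fun x => if x == p then m else 1)); last first.
  by move=> x xD; rewrite g_pt.
by rewrite (sum_ifp m (fun _ => 1) g_pD) sum1_size.
Qed.

Lemma g_cardb : \sum_(i < m) #|` bdry d (Ds i)| + (p \in bdry d D) = m + #|` bdry d D|.
Proof.
rewrite (eq_bigr (fun i => \sum_(x <- D) (x \in bdry d (Ds i)))); last first.
  move=> i _; rewrite -(@count_subset _ D) ?count_sum //.
  by move=> x /bdry_sub /g_sub.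
rewrite exchange_big /= (eq_big_seq (fun x => if x == p then m else (x \in bdry d D))); last first.
  by move=> x xD; rewrite g_ptb.
rewrite (sum_ifp m (fun x => x \in bdry d D) g_pD) -count_sum count_subset //.
by move=> x /bdry_sub.
Qed.
End Glue.


Unset Implicit Arguments.
Import GRing.Theory Num.Theory.
Local Open Scope fset_scope.
Local Open Scope ring_scope.

Theorem mainTheorem13 (d m : nat) (D : {fset seq nat})
    (Ds : 'I_m -> {fset seq nat}) (p : seq nat) :
  (2 <= d)%N -> glued d D Ds p ->
  (optimal d D <->
     ((p \in bdry d D) /\
        (\sum_(i < m) tau d (Ds i))%N%:Z + (m%:Z - 1) <= d%:Z - 2)
     \/
     ((p \notin bdry d D) /\
        (\sum_(i < m) tau d (Ds i))%N%:Z - (d%:Z - m%:Z) <= d%:Z - 2)).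
Proof.
move=> d2 gl.
have dD := g_domain gl.
have i0 : 'I_m := Ordinal (ltnW (g_m gl)).
have k2 : (2 <= #|` D|)%N.
  apply: leq_trans (g_size gl i0) _; apply: fsubset_leq_card.
  by apply/fsubsetP => x; apply: g_sub gl i0 x.
rewrite (opt_iff d2 dD k2).
have rD := relation d2 dD k2.
have rS : (\sum_(i < m) (tau d (Ds i) + (d - 2) * #|` Ds i| + 2) =
           \sum_(i < m) (d - 1) * #|` bdry d (Ds i)|)%N.
  by apply: eq_bigr => i _; apply: relation d2 (g_dom gl i) (g_size gl i).
rewrite !big_split /= -!big_distrr /= sum_nat_const card_ord in rS.
have rS' : (\sum_(i < m) tau d (Ds i) + (d - 2) * \sum_(i < m) #|` Ds i| + m * 2 =
   (d - 1) * \sum_(i < m) #|` bdry d (Ds i)|)%N := rS.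
have hk : (\sum_(i < m) #|` Ds i| + 1 = m + #|` D|)%N := g_card gl.
have hb : (\sum_(i < m) #|` bdry d (Ds i)| + (p \in bdry d D) = m + #|` bdry d D|)%N := g_cardb gl.
clear rS; move: rS' rD hk hb.
generalize (\sum_(i < m) tau d (Ds i))%N (\sum_(i < m) #|` Ds i|)%N
  (\sum_(i < m) #|` bdry d (Ds i)|)%N (tau d D) #|` D| #|` bdry d D|.
move=> T K B t k b rS rD hk hb.
have m2 := g_m gl.
have md : (m <= d)%N by case: gl => /andP[].
case: (boolP (p \in bdry d D)) => e /= in hb *.
  have et : t = (T + m - 1)%N.
    case: d d2 rS rD md {dD gl e} => [|[|f]] //= _ rS rD md.
    rewrite !subn1 !subn2 /= in rS rD; nia.
  rewrite et; split; [move=> h; left; split => //; lia | case=> [[_ h]|[//]]; lia].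
have et : (t + d = T + m)%N.
  case: d d2 rS rD md {dD gl e} => [|[|f]] //= _ rS rD md.
  rewrite !subn1 !subn2 /= in rS rD; nia.
split; [move=> h; right; split => //; lia | case=> [[//]|[_ h]]; lia].
Qed.
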